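(* There is a constant $c>0$ such that the following holds for every $k\ge1$. Let $G$ be the graph obtained from a complete binary tree of depth $k$ (root $x$, $2^k$ leaves) by adding the edges of an arbitrary $3$-regular graph on the vertex set of the $2^k$ leaves. Consider simple random walk on $G$, with stationary measure $\pi(v)=\deg(v)/\sum_w\deg(w)$, and let $S$ consist of the $2^k$ leaves together with the root $x$. Then $$h_S(x)\ge \frac{ck}{|S|}.$$
   Context: For simple random walk $(X_t)$ on $G$ and $A\subset G$, $T_A=\inf\{t\ge0:X_t\in A\}$. The harmonic measure on $S$ from $y$ is $h_{y,S}(z)=\Pr_y[X_{T_S}=z]$ and the harmonic measure from stationarity is $h_S(z)=\sum_y\pi(y)h_{y,S}(z)$. *)

(* Defs.v *)
From Stdlib Require Import Reals Arith List Bool.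
Import ListNotations.
Open Scope R_scope.

(* Vertices of the complete binary tree of depth k, heap-indexed:
   1, ..., 2^(k+1)-1; root = 1; children of u are 2u and 2u+1;
   leaves are 2^k, ..., 2^(k+1)-1. *)
Definition verts (k : nat) : list nat := seq 1 (2 ^ (k + 1) - 1).

Definition in_range (k v : nat) : bool :=
  (1 <=? v)%nat && (v <? 2 ^ (k + 1))%nat.

Definition is_leaf (k v : nat) : bool :=
  (2 ^ k <=? v)%nat && (v <? 2 ^ (k + 1))%nat.

Definition root : nat := 1%nat.

Definition tree_adj (k u v : nat) : bool :=
  in_range k u && in_range k v &&
  ((v =? 2 * u)%nat || (v =? 2 * u + 1)%nat || (u =? 2 * v)%nat || (u =? 2 * v + 1)%nat).

Definition three_regular_on_leaves (k : nat) (E : nat -> nat -> bool) : Prop :=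
  (forall u v, E u v = E v u) /\
  (forall u, E u u = false) /\
  (forall u v, E u v = true -> is_leaf k u = true /\ is_leaf k v = true) /\
  (forall u, is_leaf k u = true -> length (filter (E u) (verts k)) = 3%nat).

Definition adj (k : nat) (E : nat -> nat -> bool) (u v : nat) : bool :=
  tree_adj k u v || E u v.

Definition deg (k : nat) (E : nat -> nat -> bool) (u : nat) : nat :=
  length (filter (adj k E u) (verts k)).

Definition sumR (l : list nat) (f : nat -> R) : R :=
  fold_right (fun v acc => f v + acc) 0 l.

Definition inS (k v : nat) : bool := (v =? root)%nat || is_leaf k v.

Definition cardS (k : nat) : nat := (2 ^ k + 1)%nat.

(* hitN k E n y z = Pr_y[ T_S <= n and X_{T_S} = z ] for simple random walk
   on G (first-step recursion; T_S = inf {t >= 0 : X_t in S}). *)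
Fixpoint hitN (k : nat) (E : nat -> nat -> bool) (n : nat) (y z : nat) : R :=
  if inS k y then (if (y =? z)%nat then 1 else 0)
  else match n with
       | O => 0
       | S m => / INR (deg k E y) *
                sumR (verts k) (fun w => if adj k E y w then hitN k E m w z else 0)
       end.

Definition pi_stat (k : nat) (E : nat -> nat -> bool) (v : nat) : R :=
  INR (deg k E v) / sumR (verts k) (fun w => INR (deg k E w)).

(* Pr_pi [ T_S <= n and X_{T_S} = z ]; h_S(z) is its limit as n -> oo. *)
Definition hS_N (k : nat) (E : nat -> nat -> bool) (n z : nat) : R :=
  sumR (verts k) (fun y => pi_stat k E y * hitN k E n y z).

(* Main.v *)
Require Import Defs.
From Stdlib Require Import Reals Arith List Lia Lra Bool.
Open Scope R_scope.

Lemma sumR_app l1 l2 f : sumR (l1 ++ l2) f = sumR l1 f + sumR l2 f.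
Proof. induction l1; simpl; [lra| rewrite IHl1; lra]. Qed.

Lemma sumR_ext l f g : (forall x, In x l -> f x = g x) -> sumR l f = sumR l g.
Proof. induction l; simpl; intros H; auto. rewrite H, IHl; auto. Qed.

Lemma sumR_le l f g : (forall x, In x l -> f x <= g x) -> sumR l f <= sumR l g.
Proof. induction l; simpl; intros H; [lra|]. pose proof (H a (or_introl eq_refl)).
  pose proof (IHl (fun x h => H x (or_intror h))). lra. Qed.

Lemma sumR_plus l f g : sumR l (fun x => f x + g x) = sumR l f + sumR l g.
Proof. induction l; simpl; [lra| rewrite IHl; lra]. Qed.

Lemma sumR_scal l c f : sumR l (fun x => c * f x) = c * sumR l f.
Proof. induction l; simpl; [lra| rewrite IHl; lra]. Qed.

Lemma sumR_nonneg l f : (forall x, In x l -> 0 <= f x) -> 0 <= sumR l f.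
Proof. intros H. apply Rle_trans with (sumR l (fun _ => 0)).
  - clear H; induction l; simpl; lra.
  - apply sumR_le; auto. Qed.

Lemma sumR_const_ge l f c : (forall x, In x l -> c <= f x) -> INR (length l) * c <= sumR l f.
Proof. induction l; intros H; [simpl; lra|]. change (length (a::l)) with (S (length l)); rewrite S_INR; simpl.
  pose proof (H a (or_introl eq_refl)).
  pose proof (IHl (fun x h => H x (or_intror h))). lra. Qed.

Lemma sumR_single s len a X :
  sumR (seq s len) (fun w => if (w =? a)%nat then X else 0) =
  if ((s <=? a) && (a <? s + len))%nat then X else 0.
Proof.
  revert s; induction len; intros s; simpl.
  - destruct (Nat.leb_spec s a), (Nat.ltb_spec a (s+0)); simpl; try lra; lia.
  - rewrite IHlen. destruct (Nat.eqb_spec s a).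
    + subst. destruct (Nat.leb_spec (S a) a); [lia|]. simpl.
      destruct (Nat.leb_spec a a), (Nat.ltb_spec a (a + S len)); simpl; try lia; lra.
    + destruct (Nat.leb_spec (S s) a), (Nat.ltb_spec a (S s + len)),
        (Nat.leb_spec s a), (Nat.ltb_spec a (s + S len)); simpl; try lra; lia.
Qed.

Lemma length_filter_INR (p : nat -> bool) (l : list nat) :
  INR (length (filter p l)) = sumR l (fun w => if p w then 1 else 0).
Proof. induction l; simpl; [reflexivity|]. destruct (p a).
  - change (length (a :: filter p l)) with (S (length (filter p l))); rewrite S_INR; simpl; lra.
  - simpl; lra. Qed.

Lemma length_filter_orb {A} (p q : A -> bool) l :
  (length (filter (fun x => p x || q x) l) <= length (filter p l) + length (filter q l))%nat.
Proof. induction l; simpl; [lia|]. destruct (p a), (q a); simpl; lia. Qed.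

Lemma hitN_S k E m y z : hitN k E (S m) y z =
  if inS k y then (if (y =? z)%nat then 1 else 0)
  else / INR (deg k E y) * sumR (verts k) (fun w => if adj k E y w then hitN k E m w z else 0).
Proof. reflexivity. Qed.

Lemma deg_sum k E y : INR (deg k E y) = sumR (verts k) (fun w => if adj k E y w then 1 else 0).
Proof. unfold deg. apply length_filter_INR. Qed.

Lemma avg_bounds k E y (x : nat -> R) : (forall w, 0 <= x w <= 1) ->
  0 <= / INR (deg k E y) * sumR (verts k) (fun w => if adj k E y w then x w else 0) <= 1.
Proof.
  intros Hx.
  assert (H0 : 0 <= sumR (verts k) (fun w => if adj k E y w then x w else 0)).
  { apply sumR_nonneg; intros w _; destruct (adj k E y w); [apply Hx| lra]. }
  assert (H1 : sumR (verts k) (fun w => if adj k E y w then x w else 0) <= INR (deg k E y)).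
  { rewrite deg_sum. apply sumR_le; intros w _; destruct (adj k E y w); [apply Hx| lra]. }
  destruct (deg k E y) as [|d] eqn:Hd.
  - simpl. rewrite Rinv_0. lra.
  - assert (0 < INR (S d)) by (apply lt_0_INR; lia).
    split.
    + apply Rmult_le_pos; [left; apply Rinv_0_lt_compat; lra| lra].
    + apply Rmult_le_reg_l with (INR (S d)); [lra|].
      rewrite <- Rmult_assoc, Rinv_r; lra.
Qed.

Lemma hitN_bounds k E n y z : 0 <= hitN k E n y z <= 1.
Proof.
  revert y; induction n; intros y.
  - simpl. destruct (inS k y); [destruct (y =? z)%nat|]; lra.
  - rewrite hitN_S. destruct (inS k y); [destruct (y =? z)%nat; lra|].
    apply avg_bounds. intros w; apply IHn.
Qed.

Lemma hitN_mono k E n y z : hitN k E n y z <= hitN k E (S n) y z.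
Proof.
  revert y; induction n; intros y.
  - rewrite hitN_S. simpl. destruct (inS k y); [lra|].
    apply avg_bounds. intros w; exact (hitN_bounds k E 0 w z).
  - rewrite (hitN_S k E (S n)), hitN_S. destruct (inS k y); [lra|].
    apply Rmult_le_compat_l.
    + destruct (deg k E y) as [|d]; [simpl; rewrite Rinv_0; lra|].
      left; apply Rinv_0_lt_compat, lt_0_INR; lia.
    + apply sumR_le; intros w _; destruct (adj k E y w); [apply IHn| lra].
Qed.

Lemma pow2S k : (2 ^ (k + 1) = 2 * 2 ^ k)%nat.
Proof. rewrite Nat.add_1_r. simpl. lia. Qed.

Lemma adj_internal k E y w : three_regular_on_leaves k E ->
  (1 <= y < 2 ^ k)%nat -> (1 <= w)%nat ->
  adj k E y w = ((w =? y / 2) || (w =? 2 * y) || (w =? 2 * y + 1))%nat.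
Proof.
  intros [_ [_ [HE _]]] Hy Hw.
  pose proof (Nat.div_mod y 2 ltac:(lia)). pose proof (Nat.mod_upper_bound y 2 ltac:(lia)).
  pose proof (pow2S k).
  unfold adj. destruct (E y w) eqn:He.
  { destruct (HE _ _ He) as [Hl _]. unfold is_leaf in Hl.
    apply andb_true_iff in Hl as [Hl _]. apply Nat.leb_le in Hl. lia. }
  rewrite orb_false_r.
  apply Bool.eq_iff_eq_true. unfold tree_adj, in_range.
  repeat rewrite ?orb_true_iff, ?andb_true_iff, ?Nat.eqb_eq, ?Nat.leb_le, ?Nat.ltb_lt.
  split; intros; lia.
Qed.

Lemma sum3 k (a b c : nat) (F : nat -> R) p :
  (forall w, In w (verts k) -> p w = ((w =? a) || (w =? b) || (w =? c))%nat) ->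
  a <> b -> a <> c -> b <> c ->
  sumR (verts k) (fun w => if p w then F w else 0) =
  sumR (verts k) (fun w => if (w =? a)%nat then F a else 0) +
  sumR (verts k) (fun w => if (w =? b)%nat then F b else 0) +
  sumR (verts k) (fun w => if (w =? c)%nat then F c else 0).
Proof.
  intros Hp Hab Hac Hbc. rewrite <- !sumR_plus. apply sumR_ext. intros w Hw.
  rewrite Hp by auto.
  destruct (Nat.eqb_spec w a), (Nat.eqb_spec w b), (Nat.eqb_spec w c); subst; simpl;
  try congruence; lra.
Qed.

Lemma single_verts k a X : sumR (verts k) (fun w => if (w =? a)%nat then X else 0) =
  if ((1 <=? a) && (a <? 2 ^ (k+1)))%nat then X else 0.
Proof.
  unfold verts. rewrite sumR_single.
  pose proof (Nat.pow_le_mono_r 2 0 (k+1) ltac:(lia) ltac:(lia)). simpl in H.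
  replace (1 + (2 ^ (k + 1) - 1))%nat with (2 ^ (k+1))%nat by lia. reflexivity.
Qed.

Lemma in_verts k w : In w (verts k) -> (1 <= w)%nat.
Proof. unfold verts; rewrite in_seq; lia. Qed.

Lemma sum_adj k E y F : three_regular_on_leaves k E -> (1 <= y < 2 ^ k)%nat ->
  sumR (verts k) (fun w => if adj k E y w then F w else 0) =
  (if (2 <=? y)%nat then F (y / 2)%nat else 0) + F (2 * y)%nat + F (2 * y + 1)%nat.
Proof.
  intros HT Hy.
  pose proof (Nat.div_mod y 2 ltac:(lia)). pose proof (Nat.mod_upper_bound y 2 ltac:(lia)).
  pose proof (pow2S k).
  rewrite (sum3 k (y/2) (2*y) (2*y+1) F).
  - rewrite !single_verts.
    destruct (Nat.leb_spec 2 y).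
    + replace ((1 <=? y / 2) && (y / 2 <? 2 ^ (k + 1)))%nat with true
        by (symmetry; apply andb_true_iff; split; [apply Nat.leb_le|apply Nat.ltb_lt]; lia).
      replace ((1 <=? 2*y) && (2*y <? 2 ^ (k + 1)))%nat with true
        by (symmetry; apply andb_true_iff; split; [apply Nat.leb_le|apply Nat.ltb_lt]; lia).
      replace ((1 <=? 2*y+1) && (2*y+1 <? 2 ^ (k + 1)))%nat with true
        by (symmetry; apply andb_true_iff; split; [apply Nat.leb_le|apply Nat.ltb_lt]; lia).
      reflexivity.
    + replace ((1 <=? y / 2) && (y / 2 <? 2 ^ (k + 1)))%nat with false
        by (symmetry; apply andb_false_iff; left; apply Nat.leb_gt; lia).
      replace ((1 <=? 2*y) && (2*y <? 2 ^ (k + 1)))%nat with true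
        by (symmetry; apply andb_true_iff; split; [apply Nat.leb_le|apply Nat.ltb_lt]; lia).
      replace ((1 <=? 2*y+1) && (2*y+1 <? 2 ^ (k + 1)))%nat with true
        by (symmetry; apply andb_true_iff; split; [apply Nat.leb_le|apply Nat.ltb_lt]; lia).
      reflexivity.
  - intros w Hw. apply adj_internal; auto. apply (in_verts k w Hw).
  - lia.
  - lia.
  - lia.
Qed.

Lemma deg_internal k E y : three_regular_on_leaves k E -> (2 <= y < 2 ^ k)%nat -> deg k E y = 3%nat.
Proof.
  intros HT Hy. apply INR_eq. rewrite deg_sum.
  rewrite (sum_adj k E y (fun _ => 1)) by (auto; lia).
  destruct (Nat.leb_spec 2 y); [|lia]. simpl. lra.
Qed.

Lemma deg_root k E : three_regular_on_leaves k E -> (1 <= k)%nat -> deg k E 1 = 2%nat.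
Proof.
  intros HT Hk. pose proof (Nat.pow_le_mono_r 2 1 k ltac:(lia) Hk). simpl in H.
  apply INR_eq. rewrite deg_sum.
  rewrite (sum_adj k E 1 (fun _ => 1)) by (auto; lia). simpl. lra.
Qed.

Lemma single_le1 k a : sumR (verts k) (fun w => if (w =? a)%nat then 1 else 0) <= 1.
Proof. rewrite single_verts. destruct (_ && _); lra. Qed.

Lemma deg_le6 k E u : three_regular_on_leaves k E -> (deg k E u <= 6)%nat.
Proof.
  intros HT. destruct HT as [_ [_ [HE H3]]].
  unfold deg, adj.
  eapply Nat.le_trans; [apply (length_filter_orb (tree_adj k u) (E u))|].
  assert (A : (length (filter (tree_adj k u) (verts k)) <= 3)%nat).
  { apply INR_le. rewrite length_filter_INR.
    apply Rle_trans with (sumR (verts k) (fun w => (if (w =? 2*u)%nat then 1 else 0)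
       + (if (w =? 2*u+1)%nat then 1 else 0) + (if (w =? u/2)%nat then 1 else 0))).
    - apply sumR_le. intros w _.
      pose proof (Nat.div_mod u 2 ltac:(lia)). pose proof (Nat.mod_upper_bound u 2 ltac:(lia)).
      destruct (tree_adj k u w) eqn:Ht.
      + unfold tree_adj in Ht.
        repeat rewrite ?orb_true_iff, ?andb_true_iff, ?Nat.eqb_eq in Ht.
        destruct (Nat.eqb_spec w (2*u)), (Nat.eqb_spec w (2*u+1)), (Nat.eqb_spec w (u/2));
          try lra; exfalso; destruct Ht as [_ Ht]; set (q := (u/2)%nat) in *; lia.
      + destruct (w =? 2*u)%nat, (w =? 2*u+1)%nat, (w =? u/2)%nat; lra.
    - rewrite !sumR_plus. pose proof (single_le1 k (2*u)). pose proof (single_le1 k (2*u+1)).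
      pose proof (single_le1 k (u/2)). replace (INR 3) with 3 by (simpl; lra). lra. }
  assert (B : (length (filter (E u) (verts k)) <= 3)%nat).
  { destruct (is_leaf k u) eqn:Hl; [rewrite H3; auto|].
    apply INR_le. rewrite length_filter_INR.
    apply Rle_trans with (sumR (verts k) (fun _ => 0)).
    - apply sumR_le. intros w _. destruct (E u w) eqn:He; [|lra].
      destruct (HE _ _ He); congruence.
    - replace (INR 3) with 3 by (simpl; lra). assert (sumR (verts k) (fun _ => 0) = 0) by (clear; induction (verts k); simpl; lra). lra. }
  lia.
Qed.

Fixpoint A (k n j : nat) : R :=
  if (j =? 0)%nat then 1 else if (k <=? j)%nat then 0 else
  match n with O => 0 | S m => (A k m (j - 1) + 2 * A k m (j + 1)) / 3 end.

Lemma inS_internal k y : (2 <= y < 2 ^ k)%nat -> inS k y = false.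
Proof. intros H. unfold inS, is_leaf, root.
  destruct (Nat.eqb_spec y 1); [lia|]. destruct (Nat.leb_spec (2^k) y); [lia|]. reflexivity. Qed.

Lemma hit_A k E n : (1 <= k)%nat -> three_regular_on_leaves k E ->
  forall j y, (j <= k)%nat -> (2 ^ j <= y < 2 ^ (j + 1))%nat -> hitN k E n y root = A k n j.
Proof.
  intros Hk HT. induction n; intros j y Hj Hy;
  pose proof (pow2S j) as Pj; pose proof (Nat.pow_le_mono_r 2 1 k ltac:(lia) Hk) as Pk; rewrite Nat.pow_1_r in Pk.
  - destruct j as [|j].
    + simpl in Hy. replace y with 1%nat by lia. reflexivity.
    + destruct (Nat.eq_dec (S j) k).
      * subst k. simpl. unfold inS, is_leaf.
        destruct (Nat.leb_spec (2^S j) y); [|lia]. destruct (Nat.ltb_spec y (2^(S j+1))); [|lia].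
        rewrite orb_true_r. destruct (Nat.eqb_spec y root); unfold root in *; [lia|].
        rewrite Nat.leb_refl. reflexivity.
      * simpl. pose proof (Nat.pow_le_mono_r 2 (S j + 1) k ltac:(lia) ltac:(lia)).
        pose proof (Nat.pow_le_mono_r 2 1 (S j) ltac:(lia) ltac:(lia)). rewrite Nat.pow_1_r in H0.
        rewrite inS_internal by lia. destruct (Nat.leb_spec k (S j)); [lia|]. reflexivity.
  - destruct j as [|j].
    + simpl in Hy. replace y with 1%nat by lia. reflexivity.
    + destruct (Nat.eq_dec (S j) k).
      * subst k. rewrite hitN_S. simpl A. unfold inS, is_leaf.
        destruct (Nat.leb_spec (2^S j) y); [|lia]. destruct (Nat.ltb_spec y (2^(S j+1))); [|lia].
        rewrite orb_true_r. destruct (Nat.eqb_spec y root); unfold root in *; [lia|].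
        rewrite Nat.leb_refl. reflexivity.
      * pose proof (Nat.pow_le_mono_r 2 (S j + 1) k ltac:(lia) ltac:(lia)).
        pose proof (Nat.pow_le_mono_r 2 1 (S j) ltac:(lia) ltac:(lia)). rewrite Nat.pow_1_r in H0.
        rewrite hitN_S, inS_internal by lia.
        rewrite deg_internal by (auto; lia).
        rewrite sum_adj by (auto; lia).
        destruct (Nat.leb_spec 2 y); [|lia].
        pose proof (Nat.div_mod y 2 ltac:(lia)). pose proof (Nat.mod_upper_bound y 2 ltac:(lia)).
        pose proof (pow2S (S j + 1)) as Q1.
        pose proof (pow2S j) as Q2. replace (j + 1)%nat with (S j)%nat in Q2 by lia.
        rewrite (IHn j (y/2)%nat); [| lia | replace (j+1)%nat with (S j)%nat by lia; lia].
        rewrite (IHn (S j + 1)%nat (2*y)%nat) by lia.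
        rewrite (IHn (S j + 1)%nat (2*y+1)%nat) by lia.
        simpl A at 4. destruct (Nat.leb_spec k (S j)); [lia|].
        replace (S j - 1)%nat with j by lia.
        replace (j - 0)%nat with j by lia. replace (S (j + 1)) with (S j + 1)%nat by lia. replace (INR 3) with 3 by (simpl; lra). field.
Qed.

Lemma A_S k m j : A k (S m) j = if (j =? 0)%nat then 1 else if (k <=? j)%nat then 0 else
  (A k m (j - 1) + 2 * A k m (j + 1)) / 3.
Proof. reflexivity. Qed.
Lemma A_0 k j : A k 0 j = if (j =? 0)%nat then 1 else 0.
Proof. simpl. destruct (j =? 0)%nat; [|destruct (k <=? j)%nat]; reflexivity. Qed.

Lemma A_bounds k n j : 0 <= A k n j <= 1.
Proof.
  revert j; induction n; intros j.
  - rewrite A_0. destruct (j =? 0)%nat; lra.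
  - rewrite A_S. destruct (j =? 0)%nat; [lra|]. destruct (k <=? j)%nat; [lra|].
    pose proof (IHn (j-1)%nat). pose proof (IHn (j+1)%nat). lra.
Qed.

Lemma A_mono k n j : A k n j <= A k (S n) j.
Proof.
  revert j; induction n; intros j.
  - rewrite A_0, A_S. destruct (j =? 0)%nat; [lra|]. destruct (k <=? j)%nat; [lra|].
    pose proof (A_bounds k 0 (j-1)). pose proof (A_bounds k 0 (j+1)). lra.
  - rewrite (A_S k (S n)), (A_S k n). destruct (j =? 0)%nat; [lra|]. destruct (k <=? j)%nat; [lra|].
    pose proof (IHn (j-1)%nat). pose proof (IHn (j+1)%nat). lra.
Qed.

Lemma A_cvs k j : {l | Un_cv (fun n => A k n j) l}.
Proof.
  apply growing_cv.
  - intros n. apply A_mono.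
  - exists 1. intros x [i ->]. apply A_bounds.
Defined.

Definition L k j := proj1_sig (A_cvs k j).

Lemma L_cv k j : Un_cv (fun n => A k n j) (L k j).
Proof. unfold L. destruct (A_cvs k j); assumption. Qed.

Lemma L_ge k n j : A k n j <= L k j.
Proof. apply (growing_ineq (fun n => A k n j)); [intros m; apply A_mono| apply L_cv]. Qed.

Lemma Un_cv_ext f g l : (forall n, f n = g n) -> Un_cv f l -> Un_cv g l.
Proof. intros H Hc eps He. destruct (Hc eps He) as [N HN]. exists N. intros n Hn.
  rewrite <- H. auto. Qed.

Lemma Un_cv_const c : Un_cv (fun _ => c) c.
Proof. intros eps He. exists 0%nat. intros n _. unfold R_dist. rewrite Rminus_diag, Rabs_R0. lra. Qed.

Lemma L_const k j c : (forall n, A k n j = c) -> L k j = c.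
Proof. intros H. apply UL_sequence with (fun n => A k n j); [apply L_cv|].
  apply Un_cv_ext with (fun _ => c); [intros; rewrite H; auto| apply Un_cv_const]. Qed.

Lemma L0 k : L k 0 = 1.
Proof. apply L_const. intros [|n]; reflexivity. Qed.

Lemma Lk k j : (1 <= j)%nat -> (k <= j)%nat -> L k j = 0.
Proof. intros H1 H2. apply L_const. intros [|n].
  - rewrite A_0. destruct (Nat.eqb_spec j 0); [lia|reflexivity].
  - rewrite A_S. destruct (Nat.eqb_spec j 0); [lia|]. destruct (Nat.leb_spec k j); [reflexivity|lia].
Qed.

Lemma L_rec k j : (1 <= j)%nat -> (j < k)%nat ->
  L k j = (L k (j - 1) + 2 * L k (j + 1)) / 3.
Proof.
  intros H1 H2. apply UL_sequence with (fun n => A k (n + 1) j).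
  - apply (CV_shift' (fun n => A k n j) 1). apply L_cv.
  - apply Un_cv_ext with (fun n => (A k n (j - 1) + 2 * A k n (j + 1)) * / 3).
    + intros n. cbv beta. rewrite (Nat.add_1_r n), A_S. destruct (Nat.eqb_spec j 0); [lia|].
      destruct (Nat.leb_spec k j); [lia|]. reflexivity.
    + unfold Rdiv. apply CV_mult; [|apply Un_cv_const].
      apply CV_plus; [apply L_cv|].
      apply CV_mult with (An := fun _ => 2); [apply Un_cv_const| apply L_cv].
Qed.

Lemma L_nonneg k j : 0 <= L k j.
Proof. pose proof (L_ge k 0 j). pose proof (A_bounds k 0 j). lra. Qed.

Lemma e_geom k j : (j < k)%nat ->
  L k j - L k (j + 1) = (L k 0 - L k 1) * (1/2) ^ j.
Proof.
  induction j; intros H.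
  - simpl. lra.
  - specialize (IHj ltac:(lia)).
    pose proof (L_rec k (S j) ltac:(lia) H) as R.
    replace (S j - 1)%nat with j in R by lia.
    replace (j + 1)%nat with (S j) in IHj by lia.
    change ((1/2) ^ S j) with (1/2 * (1/2) ^ j).
    set (p := (1/2)^j) in *. set (e := L k 0 - L k 1) in *.
    lra.
Qed.

Lemma tele k m : (m <= k)%nat ->
  L k 0 - L k m = (L k 0 - L k 1) * (2 - 2 * (1/2) ^ m).
Proof.
  induction m; intros H.
  - simpl. lra.
  - specialize (IHm ltac:(lia)). pose proof (e_geom k m ltac:(lia)) as G.
    replace (m + 1)%nat with (S m) in G by lia.
    change ((1/2) ^ S m) with (1/2 * (1/2) ^ m).
    set (p := (1/2)^m) in *. set (e := L k 0 - L k 1) in *. lra.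
Qed.

Lemma half_pow_le k : (1 <= k)%nat -> 0 < (1/2) ^ k <= 1/2.
Proof.
  intros Hk. destruct k; [lia|]. change ((1/2) ^ S k) with (1/2 * (1/2) ^ k).
  pose proof (pow_lt (1/2) k ltac:(lra)).
  assert ((1/2)^k <= 1). { apply Rle_trans with (1 ^ k); [apply pow_incr; lra| rewrite pow1; lra]. } split; nra.
Qed.

Lemma L_lower k j : (1 <= k)%nat -> (j < k)%nat -> (1/2) ^ (j + 1) <= L k j.
Proof.
  intros Hk Hj.
  pose proof (tele k k ltac:(lia)) as T. rewrite (Lk k k) in T by lia.
  pose proof (half_pow_le k Hk).
  pose proof (e_geom k j Hj). pose proof (L_nonneg k (j+1)).
  rewrite L0 in *.
  assert (He : 1/2 <= 1 - L k 1).
  { set (e := 1 - L k 1) in *. set (p := (1/2)^k) in *.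
    destruct (Rlt_or_le e (1/2)) as [Hl|Hl]; [|exact Hl].
    assert (0 < (1/2 - e) * (2 - 2 * p)) by (apply Rmult_lt_0_compat; lra). nra. }
  rewrite pow_add. simpl pow.
  pose proof (pow_lt (1/2) j ltac:(lra)).
  set (e := 1 - L k 1) in *. set (p := (1/2)^j) in *. nra.
Qed.

Lemma A_mono_le k n m j : (n <= m)%nat -> A k n j <= A k m j.
Proof. induction 1; [lra|]. pose proof (A_mono k m j). lra. Qed.

Lemma A_eventually k j : (1 <= k)%nat -> (j < k)%nat ->
  exists N, forall n, (N <= n)%nat -> (1/2) ^ (j + 2) <= A k n j.
Proof.
  intros Hk Hj. pose proof (L_lower k j Hk Hj).
  assert (Hp : 0 < (1/2) ^ (j+2)) by (apply pow_lt; lra).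
  destruct (L_cv k j _ Hp) as [N HN]. exists N. intros n Hn.
  specialize (HN n Hn). unfold R_dist in HN. apply Rabs_def2 in HN.
  assert (Eq: (1/2)^(j+2) = (1/2)^(j+1) * (1/2)) by (replace (j+2)%nat with (S (j+1)) by lia; simpl; lra).
  rewrite Eq in *.
  pose proof (pow_lt (1/2) (j+1) ltac:(lra)). lra.
Qed.

Lemma A_all k K : (1 <= k)%nat ->
  exists N, forall j, (j < K)%nat -> (j < k)%nat -> (1/2) ^ (j + 2) <= A k N j.
Proof.
  intros Hk. induction K.
  - exists 0%nat. intros; lia.
  - destruct IHK as [N1 H1].
    destruct (Nat.lt_ge_cases K k) as [HK|HK].
    + destruct (A_eventually k K Hk HK) as [N2 H2].
      exists (Nat.max N1 N2). intros j Hj Hjk.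
      destruct (Nat.eq_dec j K).
      * subst. apply H2. lia.
      * eapply Rle_trans; [apply H1; lia|]. apply A_mono_le; lia.
    + exists N1. intros j Hj Hjk. apply H1; lia.
Qed.

Definition Dt k E := sumR (verts k) (fun w => INR (deg k E w)).

Lemma sumR_const l c : sumR l (fun _ => c) = INR (length l) * c.
Proof. induction l; [simpl; lra|]. change (length (a::l)) with (S (length l)).
  rewrite S_INR. simpl. rewrite IHl. lra. Qed.

Lemma verts_cons k : verts k = 1%nat :: seq 2 (2 ^ (k + 1) - 2).
Proof. unfold verts. pose proof (Nat.pow_le_mono_r 2 1 (k+1) ltac:(lia) ltac:(lia)).
  rewrite Nat.pow_1_r in H. replace (2 ^ (k + 1) - 1)%nat with (S (2 ^ (k + 1) - 2)) by lia.
  reflexivity. Qed.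

Lemma Dt_ge k E : three_regular_on_leaves k E -> (1 <= k)%nat -> 2 <= Dt k E.
Proof.
  intros HT Hk. unfold Dt. rewrite verts_cons. simpl sumR.
  rewrite deg_root by auto.
  assert (0 <= sumR (seq 2 (2 ^ (k + 1) - 2)) (fun w => INR (deg k E w)))
    by (apply sumR_nonneg; intros; apply pos_INR).
  simpl INR. lra.
Qed.

Lemma Dt_le k E : three_regular_on_leaves k E -> Dt k E <= 12 * 2 ^ k.
Proof.
  intros HT. unfold Dt. eapply Rle_trans.
  - apply sumR_le with (g := fun _ => 6). intros w _.
    replace 6 with (INR 6) by (simpl; lra). apply le_INR. apply deg_le6; auto.
  - rewrite sumR_const. unfold verts. rewrite length_seq.
    assert (INR (2 ^ (k + 1) - 1) <= 2 * 2 ^ k).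
    { apply Rle_trans with (INR (2 ^ (k+1))). apply le_INR; lia.
      rewrite pow_INR, pow_add, pow_1. replace (INR 2) with 2 by (simpl; lra). lra. }
    lra.
Qed.

Lemma pi_internal k E y : three_regular_on_leaves k E -> (2 <= y < 2 ^ k)%nat ->
  pi_stat k E y = 3 / Dt k E.
Proof. intros HT Hy. unfold pi_stat. rewrite deg_internal by auto. unfold Dt. replace (INR 3) with 3 by (simpl; lra). reflexivity. Qed.

Lemma prefix_sum (F : nat -> R) c K :
  (forall j, (1 <= j <= K)%nat -> c <= sumR (seq (2 ^ j) (2 ^ j)) F) ->
  forall m, (m <= K)%nat -> F 1%nat + INR m * c <= sumR (seq 1 (2 ^ (m + 1) - 1)) F.
Proof.
  intros Hb. induction m; intros Hm.
  - simpl. lra.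
  - specialize (IHm ltac:(lia)).
    pose proof (Nat.pow_le_mono_r 2 1 (m+1) ltac:(lia) ltac:(lia)) as P. rewrite Nat.pow_1_r in P.
    replace (2 ^ (S m + 1) - 1)%nat with ((2 ^ (m + 1) - 1) + 2 ^ (m+1))%nat
      by (rewrite (pow2S (S m)); replace (S m) with (m+1)%nat by lia; lia).
    rewrite seq_app, sumR_app.
    replace (1 + (2 ^ (m + 1) - 1))%nat with (2 ^ (m+1))%nat by lia.
    pose proof (Hb (m+1)%nat ltac:(lia)). rewrite S_INR. lra.
Qed.

Theorem mainTheorem6 :
  exists c : R, 0 < c /\
  forall (k : nat) (E : nat -> nat -> bool),
    (1 <= k)%nat ->
    three_regular_on_leaves k E ->
    exists h : R,
      Un_cv (fun n => hS_N k E n root) h /\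
      c * INR k / INR (cardS k) <= h.
Proof.
  exists (1/16). split; [lra|]. intros k E Hk HT.
  pose proof (Dt_ge k E HT Hk) as HD1. pose proof (Dt_le k E HT) as HD2.
  assert (Hpi : forall y, 0 <= pi_stat k E y).
  { intros y. unfold pi_stat. change (sumR (verts k) (fun w => INR (deg k E w))) with (Dt k E).
    unfold Rdiv. apply Rmult_le_pos; [apply pos_INR| left; apply Rinv_0_lt_compat; lra]. }
  assert (Hgr : Un_growing (fun n => hS_N k E n root)).
  { intros n. unfold hS_N. apply sumR_le. intros y _.
    apply Rmult_le_compat_l; [apply Hpi| apply hitN_mono]. }
  assert (Hub : has_ub (fun n => hS_N k E n root)).
  { exists (sumR (verts k) (fun y => pi_stat k E y)). intros x [i ->].
    unfold hS_N. apply sumR_le. intros y _. pose proof (hitN_bounds k E i y root).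
    pose proof (Hpi y). nra. }
  destruct (growing_cv _ Hgr Hub) as [h Hh].
  exists h. split; [exact Hh|].
  destruct (A_all k k Hk) as [N HN].
  pose proof (growing_ineq _ h Hgr Hh N) as Hge. cbv beta in Hge.
  set (F := fun y => pi_stat k E y * hitN k E N y root).
  assert (HF : forall y, 0 <= F y).
  { intros y. unfold F. pose proof (hitN_bounds k E N y root). pose proof (Hpi y). nra. }
  pose proof (Nat.pow_le_mono_r 2 1 k ltac:(lia) Hk) as Pk. rewrite Nat.pow_1_r in Pk.
  assert (Hpre : sumR (seq 1 (2 ^ k - 1)) F <= hS_N k E N root).
  { unfold hS_N. fold F. unfold verts.
    replace (2 ^ (k + 1) - 1)%nat with ((2 ^ k - 1) + 2 ^ k)%nat by (rewrite pow2S; lia).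
    rewrite seq_app, sumR_app.
    assert (0 <= sumR (seq (1 + (2 ^ k - 1)) (2 ^ k)) F) by (apply sumR_nonneg; auto). lra. }
  assert (Hblk : forall j, (1 <= j <= k - 1)%nat ->
     3/4 * / Dt k E <= sumR (seq (2 ^ j) (2 ^ j)) F).
  { intros j Hj.
    eapply Rle_trans; [|apply sumR_const_ge with (c := 3 * / Dt k E * (1/2) ^ (j + 2))].
    - rewrite length_seq, pow_INR. replace (INR 2) with 2 by (simpl; lra).
      rewrite pow_add. replace (2 ^ j * (3 * / Dt k E * ((1 / 2) ^ j * (1 / 2) ^ 2)))
        with ((2 * (1/2)) ^ j * (3 * / Dt k E * (1/2)^2)) by (rewrite Rpow_mult_distr; ring).
      replace (2 * (1/2)) with 1 by lra. rewrite pow1. simpl. lra.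
    - intros y Hy. apply in_seq in Hy.
      pose proof (pow2S j). pose proof (Nat.pow_le_mono_r 2 (j + 1) k ltac:(lia) ltac:(lia)).
      pose proof (Nat.pow_le_mono_r 2 1 j ltac:(lia) ltac:(lia)). rewrite Nat.pow_1_r in H1.
      unfold F. rewrite pi_internal by (auto; lia).
      rewrite (hit_A k E N Hk HT j y) by lia.
      apply Rmult_le_compat_l.
      + apply Rmult_le_pos; [lra| left; apply Rinv_0_lt_compat; lra].
      + apply HN; lia. }
  pose proof (prefix_sum F (3/4 * / Dt k E) (k - 1) Hblk (k - 1) ltac:(lia)) as Hp.
  replace (k - 1 + 1)%nat with k in Hp by lia.
  assert (HF1 : F 1%nat = 2 * / Dt k E).
  { unfold F. rewrite (hit_A k E N Hk HT 0 1) by (simpl; lia).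
    replace (A k N 0) with 1 by (destruct N; reflexivity).
    unfold pi_stat. rewrite deg_root by auto. simpl INR. unfold Dt. lra. }
  rewrite HF1 in Hp.
  unfold cardS. rewrite plus_INR, pow_INR. replace (INR 2) with 2 by (simpl; lra).
  rewrite minus_INR in Hp by lia. simpl INR in Hp.
  pose proof (pos_INR k) as Kp. pose proof (le_INR 1 k Hk) as K1. simpl INR in K1.
  set (X := 2 ^ k) in *. set (Kk := INR k) in *.
  assert (HX : 2 <= X) by (unfold X; replace 2 with (INR 2) by (simpl; lra); rewrite <- pow_INR; apply le_INR; lia).
  assert (iD : 0 < / Dt k E) by (apply Rinv_0_lt_compat; lra).
  apply Rle_trans with (3/4 * Kk * / (12 * X)).
  - change (INR 1) with 1. replace (1/16 * Kk / (X + 1)) with (Kk/16 * / (X + 1)) by (field; lra).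
    replace (3/4 * Kk * / (12 * X)) with (Kk/16 * / X) by (field; lra).
    apply Rmult_le_compat_l; [lra|].
    apply Rinv_le_contravar; lra.
  - apply Rle_trans with (3/4 * Kk * / Dt k E).
    + apply Rmult_le_compat_l; [lra|]. apply Rinv_le_contravar; lra.
    + nra.
Qed.
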